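(* Let $\mathcal G$ be a temporal graph with $n$ vertices and $m$ contacts, considered with strict journeys. Then there exists a happy temporal graph $\mathcal H$ with $n+2m$ vertices and $4m$ edges, together with an (injective) mapping $\sigma:V_{\mathcal G}\to V_{\mathcal H}$, such that for all $u,v\in V_{\mathcal G}$, $(u,v)$ is an arc of the strict reachability graph $\mathcal C(\mathcal G)$ if and only if $(\sigma(u),\sigma(v))$ is an arc of $\mathcal C(\mathcal H)$.
   Context: A temporal graph is a triple $\mathcal G=(V,E,\lambda)$ where $V$ is a finite vertex set, $E$ is a set of undirected edges on $V$, and $\lambda:E\to 2^{\mathbb N}\setminus\{\emptyset\}$ assigns to each edge a nonempty set of presence times. The footprint of $\mathcal G$ is the static graph $(V,E)$. A contact is a pair $(e,t)$ with $e\in E$ and $t\in\lambda(e)$. A journey from $u$ to $v$ is a sequence of contacts $(e_1,t_1),\dots,(e_k,t_k)$, $k\ge 1$, such that $e_1,\dots,e_k$ form a path from $u$ to $v$ in the footprint and $t_1\le t_2\le\dots\le t_k$ (a non-strict journey); it is strict if $t_1<t_2<\dots<t_k$. $\mathcal G$ is proper if $\lambda(e)\cap\lambda(e')=\emptyset$ for any two distinct edges $e,e'$ sharing an endpoint (in a proper graph every journey is strict); simple if $|\lambda(e)|=1$ for every edge $e$; happy if it is both proper and simple. The reachability graph $\mathcal C(\mathcal G)$ (with respect to a chosen journey notion) is the directed graph on $V$ having an arc $(u,v)$, $u\neq v$, if and only if there is a journey from $u$ to $v$. *)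

(* Defs.v *)
From HB Require Import structures.
From mathcomp Require Import all_boot.
From mathcomp Require Export finmap.
Set Implicit Arguments. Unset Strict Implicit. Unset Printing Implicit Defensive.
Local Open Scope fset_scope.

(* A temporal graph: vertex set = the finite type V, edge set E (edges are
   2-element subsets of V), and presence times lam e : a nonempty finite set
   of naturals for every edge e \in E (values outside E are irrelevant). *)
Definition is_tgraph (V : finType) (E : {set {set V}})
  (lam : {set V} -> {fset nat}) : Prop :=
  (forall e, e \in E -> #|e| = 2) /\ (forall e, e \in E -> lam e != fset0).

Definition ncontacts (V : finType) (E : {set {set V}})
  (lam : {set V} -> {fset nat}) : nat :=
  (\sum_(e in E) #|` lam e|)%N.

(* strict journey from u to v: a path u = x_0, x_1, ..., x_k = v (k >= 1,
   pairwise distinct vertices) in the footprint, with contact times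
   t_1 < ... < t_k, t_i \in lam {x_(i-1), x_i}. *)
Definition strict_journey (V : finType) (E : {set {set V}})
  (lam : {set V} -> {fset nat}) (u v : V) : Prop :=
  exists (p : seq V) (ts : seq nat),
    size ts = size p /\ (0 < size p)%N /\ uniq (u :: p) /\ last u p = v /\
        (forall i, (i < size p)%N ->
           [set nth u (u :: p) i; nth u p i] \in E /\
           nth 0%N ts i \in lam [set nth u (u :: p) i; nth u p i]) /\
        sorted ltn ts.

Definition reach_arc (V : finType) (E : {set {set V}})
  (lam : {set V} -> {fset nat}) (u v : V) : Prop :=
  u != v /\ strict_journey E lam u v.

Definition is_simple (V : finType) (E : {set {set V}})
  (lam : {set V} -> {fset nat}) : Prop :=
  forall e, e \in E -> #|` lam e| = 1%N.

Definition is_proper (V : finType) (E : {set {set V}})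
  (lam : {set V} -> {fset nat}) : Prop :=
  forall e e', e \in E -> e' \in E -> e != e' -> e :&: e' != set0 ->
    lam e `&` lam e' = fset0.

Definition is_happy (V : finType) (E : {set {set V}})
  (lam : {set V} -> {fset nat}) : Prop :=
  is_proper E lam /\ is_simple E lam.

(* Main.v *)
Require Import Defs.
From mathcomp Require Import all_boot finmap zify.
Set Implicit Arguments. Unset Strict Implicit. Unset Printing Implicit Defensive.
Local Open Scope fset_scope.

Definition cs (V : finType) (E : {set {set V}}) (lam : {set V} -> {fset nat})
  : seq ({set V} * nat) := [seq (e, t) | e <- enum E, t <- (lam e : seq nat)].
Notation Ct E lam := (seq_sub (cs E lam)).
Notation Gt E lam := (Ct E lam * bool)%type.


Definition ends (V : finType) (E : {set {set V}}) (lam : {set V} -> {fset nat}) (g : Gt E lam) : {set V} := (ssval g.1).1.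
Definition tim (V : finType) (E : {set {set V}}) (lam : {set V} -> {fset nat}) (g : Gt E lam) : nat := (ssval g.1).2.
Definition ph (V : finType) (E : {set {set V}}) (lam : {set V} -> {fset nat}) (w : V) (g : Gt E lam) : nat :=
  (([pick x in ends g] == Some w) (+) g.2 : bool).
Definition lab (V : finType) (E : {set {set V}}) (lam : {set V} -> {fset nat}) (w : V) (g : Gt E lam) : nat :=
  ((2 * tim g + ph w g) * #|{: Gt E lam}| + enum_rank g)%N.
Definition edg (V : finType) (E : {set {set V}}) (lam : {set V} -> {fset nat}) (q : Gt E lam * V) : {set (V + Gt E lam)%type} :=
  [set inl q.2; inr q.1].
Definition Fs (V : finType) (E : {set {set V}}) (lam : {set V} -> {fset nat}) : {set {set (V + Gt E lam)%type}} :=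
  [set edg q | q in [set q : Gt E lam * V | q.2 \in ends q.1]].
Definition mu (V : finType) (E : {set {set V}}) (lam : {set V} -> {fset nat}) (S : {set (V + Gt E lam)%type}) : {fset nat} :=
  if [pick q | S == edg q] is Some q then [fset lab q.2 q.1]%fset else fset0%fset.

Lemma cs_mem (V : finType) (E : {set {set V}}) (lam : {set V} -> {fset nat}) (x : {set V} * nat) : x \in cs E lam = (x.1 \in E) && (x.2 \in lam x.1).
Proof.
apply/allpairsPdep/andP.
- by case=> e [t [He Ht ->]] /=; rewrite mem_enum in He.
- case: x => e t /= [He Ht]; exists e, t; by rewrite mem_enum.
Qed.

Lemma cs_uniq (V : finType) (E : {set {set V}}) (lam : {set V} -> {fset nat}) : uniq (cs E lam).
Proof.
apply: allpairs_uniq_dep; first exact: enum_uniq.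
  by move=> e _; exact: fset_uniq.
by case=> [e1 t1] [e2 t2] _ _ /= [-> ->].
Qed.

Lemma cs_size (V : finType) (E : {set {set V}}) (lam : {set V} -> {fset nat}) : size (cs E lam) = ncontacts E lam.
Proof.
rewrite /cs size_allpairs_dep /ncontacts -big_enum /= sumnE big_map.
by [].
Qed.

Lemma edg_inj (V : finType) (E : {set {set V}}) (lam : {set V} -> {fset nat}) : injective (@edg V E lam).
Proof.
move=> [g v] [g' v'] /setP H.
have := H (inl v); have := H (inr g); rewrite /edg !inE /=.
rewrite !eqxx /= => /esym/eqP [->] /esym/orP [/eqP [->] //| /eqP]; done.
Qed.


Lemma muE (V : finType) (E : {set {set V}}) (lam : {set V} -> {fset nat}) q :
  mu (edg q) = [fset (@lab V E lam q.2 q.1)]%fset.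
Proof.
rewrite /mu; case: pickP => [q' /eqP /edg_inj -> // | H].
by have := H q; rewrite eqxx.
Qed.

Lemma ends_E (V : finType) (E : {set {set V}}) (lam : {set V} -> {fset nat}) (g : Gt E lam) :
  ends g \in E /\ tim g \in lam (ends g).
Proof.
by have := ssvalP g.1; rewrite cs_mem => /andP.
Qed.

Lemma ends2 (V : finType) (E : {set {set V}}) (lam : {set V} -> {fset nat}) (g : Gt E lam) :
  is_tgraph E lam -> #|ends g| = 2.
Proof. by case=> H _; apply: H; case: (ends_E g). Qed.

Lemma card2_eq (V : finType) (e : {set V}) a b : #|e| = 2 -> a \in e -> b \in e -> a != b ->
  e = [set a; b].
Proof.
move=> He Ha Hb Hab; apply/eqP; rewrite eq_sym eqEcard He cards2 Hab andbT.
by apply/subsetP => x; rewrite !inE => /orP [] /eqP ->.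
Qed.

Lemma ph_sum (V : finType) (E : {set {set V}}) (lam : {set V} -> {fset nat}) (g : Gt E lam) a b :
  is_tgraph E lam -> a \in ends g -> b \in ends g -> a != b -> (ph a g + ph b g = 1)%N.
Proof.
move=> HG Ha Hb Hab; have He := card2_eq (ends2 g HG) Ha Hb Hab.
rewrite /ph; case: pickP => [x Hx | H]; last by have := H a; rewrite Ha.
have: x \in [set a; b] by rewrite -He.
have Hs : (Some a == Some b) = false.
  by apply/eqP; case=> E'; move: Hab; rewrite E' eqxx.
rewrite !inE => /orP [] /eqP ->; rewrite eqxx ?Hs /=.
  by case: g.2.
by rewrite eq_sym Hs; case: g.2.
Qed.

Lemma ph_le1 (V : finType) (E : {set {set V}}) (lam : {set V} -> {fset nat}) (g : Gt E lam) a :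
  (ph a g <= 1)%N.
Proof. by rewrite /ph; case: (_ (+) _). Qed.

Lemma divK_lem (K x y r r' : nat) : (r < K -> r' < K -> x * K + r = y * K + r' -> x = y /\ r = r')%N.
Proof.
move=> Hr Hr' H.
have Er : r = r'.
  by have := congr1 (modn^~ K) H; rewrite !modnMDl !modn_small.
split=> //; move: H; rewrite Er => /addIn /eqP; rewrite eqn_pmul2r; first by move/eqP.
by apply: leq_ltn_trans Hr'.
Qed.

Lemma lab_inj (V : finType) (E : {set {set V}}) (lam : {set V} -> {fset nat}) (g g' : Gt E lam) w w' :
  is_tgraph E lam -> w \in ends g -> w' \in ends g' -> lab w g = lab w' g' -> (g, w) = (g', w').
Proof.
move=> HG Hw Hw'; rewrite /lab => /divK_lem [] //; try exact: ltn_ord.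
move=> H1 /val_inj /enum_rank_inj Eg; subst g'.
case: (eqVneq w w') => [-> // | Hne].
have := ph_sum HG Hw Hw' Hne; lia.
Qed.

Lemma card_F (V : finType) (E : {set {set V}}) (lam : {set V} -> {fset nat}) :
  is_tgraph E lam -> #|Fs E lam| = 4 * ncontacts E lam.
Proof.
move=> HG; rewrite /Fs card_imset; last exact: edg_inj.
rewrite -sum1_card (eq_bigl (fun q : Gt E lam * V => xpredT q.1 && (q.2 \in ends q.1))); last first.
  by move=> q; rewrite inE.
rewrite -(pair_big_dep xpredT (fun g v => v \in ends g) (fun _ _ => 1)) /=.
under eq_bigr => g _ do rewrite sum1_card (ends2 g HG).
rewrite sum_nat_const card_prod card_bool card_seq_sub ?cs_uniq // cs_size.
lia.
Qed.

Lemma lt_lem x y r r' K : (x < y -> r < K -> x*K + r < y*K + r')%N.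
Proof. nia. Qed.
Lemma mono_lem x y r r' K : (r' < K -> x*K + r < y*K + r' -> x <= y)%N.
Proof. nia. Qed.

Lemma par_dec j : exists i, j = i.*2 \/ j = (i.*2).+1.
Proof.
exists j./2; case: (boolP (odd j)) => H; [right|left]; by rewrite -{1}(odd_double_half j) ?(negbTE H) ?H.
Qed.

Lemma mk_even T (x0 : T) (A B : nat -> T) k i : (i < k)%N ->
  nth x0 (mkseq (fun j => if odd j then B j./2 else A j./2) k.*2) i.*2 = A i.
Proof. by move=> H; rewrite nth_mkseq ?ltn_double // odd_double doubleK. Qed.

Lemma mk_odd T (x0 : T) (A B : nat -> T) k i : (i < k)%N ->
  nth x0 (mkseq (fun j => if odd j then B j./2 else A j./2) k.*2) (i.*2).+1 = B i.
Proof.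
move=> H; rewrite nth_mkseq /=; first by rewrite odd_double uphalf_double.
by rewrite -doubleS leq_double.
Qed.

Lemma fwd (V : finType) (E : {set {set V}}) (lam : {set V} -> {fset nat}) u v :
  is_tgraph E lam -> strict_journey E lam u v ->
  strict_journey (Fs E lam) (@mu V E lam) (inl u) (inl v).
Proof.
move=> HG [p [ts [Hs [Hp [Hu [Hl [Hst Hso]]]]]]].
set k := size p in Hs Hp Hst.
have c0 : Ct E lam.
  have [H1 H2] := Hst 0%N Hp.
  have H : ([set nth u (u :: p) 0; nth u p 0], nth 0%N ts 0) \in cs E lam.
    by rewrite cs_mem /= H1.
  exact: (SeqSub H).
pose a i := nth u (u :: p) i. pose b i := nth u p i. pose e i := [set a i; b i].
pose t i := nth 0%N ts i.
pose g i : Gt E lam := (insubd c0 (e i, t i), [pick x in e i] == Some (a i)).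
have Hends : forall i, (i < k)%N -> ends (g i) = e i /\ tim (g i) = t i.
  move=> i Hi; have [H1 H2] := Hst i Hi.
  by rewrite /ends /tim /= insubdK // cs_mem /= H1.
have Hab : forall i, (i < k)%N -> a i != b i.
  move=> i Hi; rewrite /a /b -[nth u p i]/(nth u (u :: p) i.+1).
  rewrite nth_uniq //=; rewrite -/k; lia.
have Hph : forall i, (i < k)%N -> ph (a i) (g i) = 0%N /\ ph (b i) (g i) = 1%N.
  move=> i Hi; have [E1 _] := Hends i Hi.
  have P0 : ph (a i) (g i) = 0%N by rewrite /ph E1 /= addbb.
  have Ha : a i \in ends (g i) by rewrite E1 !inE eqxx.
  have Hb : b i \in ends (g i) by rewrite E1 !inE eqxx orbT.
  by split=> //; have := ph_sum HG Ha Hb (Hab i Hi); rewrite P0 add0n.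
pose P : seq (V + Gt E lam)%type :=
  mkseq (fun j => if odd j then inl (b j./2) else inr (g j./2)) k.*2.
pose TS : seq nat :=
  mkseq (fun j => if odd j then lab (b j./2) (g j./2) else lab (a j./2) (g j./2)) k.*2.
have HfE : forall i, (i <= k)%N -> nth (inl u) (inl u :: P) i.*2 = inl (a i).
  case=> [//|i] Hi; rewrite doubleS /= (@mk_odd _ _ (fun i => inr (g i)) (fun i => inl (b i))) //.
have HfO : forall i, (i < k)%N -> nth (inl u) (inl u :: P) (i.*2).+1 = inr (g i).
  by move=> i Hi; rewrite /= (@mk_even _ _ (fun i => inr (g i)) (fun i => inl (b i))).
have HTE : forall i, (i < k)%N -> nth 0%N TS i.*2 = lab (a i) (g i).
  by move=> i Hi; rewrite (@mk_even _ _ (fun i => lab (a i) (g i)) (fun i => lab (b i) (g i))).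
have HTO : forall i, (i < k)%N -> nth 0%N TS (i.*2).+1 = lab (b i) (g i).
  by move=> i Hi; rewrite (@mk_odd _ _ (fun i => lab (a i) (g i)) (fun i => lab (b i) (g i))).
have HsP : size P = k.*2 by rewrite size_mkseq.
have HsT : size TS = k.*2 by rewrite size_mkseq.
have Hut : uniq ts by move: Hso; rewrite ltn_sorted_uniq_leq => /andP [].
exists P, TS; split; first by rewrite HsP HsT.
split; first by rewrite HsP double_gt0.
split.
  apply/(uniqP (inl u)) => j j'; rewrite !inE /= HsP.
  have [i [-> | ->]] := par_dec j; have [i' [-> | ->]] := par_dec j' => Hj Hj' Hjj.
  - move: Hjj; rewrite !HfE; try lia.
    move=> [] /eqP; rewrite /a nth_uniq //=; try lia.
  - by move: Hjj; rewrite HfE ?HfO //; lia.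
  - by move: Hjj; rewrite HfE ?HfO //; lia.
  - move: Hjj; rewrite !HfO; try lia.
    move=> [] H1 _.
    have Hi : (i < k)%N by lia. have Hi' : (i' < k)%N by lia.
    have [_ T1] := Hends i Hi; have [_ T2] := Hends i' Hi'.
    have : t i = t i' by rewrite -T1 -T2 /tim /= H1.
    move/eqP; rewrite /t nth_uniq //; [lia| rewrite Hs; lia | rewrite Hs; lia].
split.
  rewrite (last_nth (inl u)) HsP HfE //; congr inl.
  by rewrite /a -last_nth.
split.
  move=> j Hj; rewrite -[nth (inl u) P j]/(nth (inl u) (inl u :: P) j.+1).
  rewrite HsP in Hj; move: Hj.
  have [i [-> | ->]] := par_dec j => Hj.
  - have Hi : (i < k)%N by lia.
    rewrite HfE ?HfO ?HTE //; try lia.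
    have [E1 _] := Hends i Hi.
    split.
      apply/imsetP; exists (g i, a i) => //; by rewrite inE /= E1 !inE eqxx.
    by rewrite -[[set _; _]]/(edg (g i, a i)) muE in_fset1.
  - have Hi : (i < k)%N by lia.
    rewrite -doubleS HfE ?HfO ?HTO //; try lia.
    have [E1 _] := Hends i Hi.
    rewrite setUC -[[set inl _; _]]/(edg (g i, a i.+1)).
    split.
      apply/imsetP; exists (g i, a i.+1) => //; by rewrite inE /= E1 !inE eqxx orbT.
    by rewrite muE in_fset1.
apply/(sortedP 0%N) => j; rewrite HsT.
have [i [-> | ->]] := par_dec j => Hj.
- have Hi : (i < k)%N by lia.
  rewrite HTE ?HTO //; have [P1 P2] := Hph i Hi.
  by rewrite /lab P1 P2; apply: lt_lem; [lia | exact: ltn_ord].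
- have Hi : (i.+1 < k)%N by lia.
  rewrite -doubleS HTO ?HTE //; try lia.
  have [_ P2] := Hph i (ltnW Hi); have [P1 _] := Hph i.+1 Hi.
  rewrite /lab P1 P2; apply: lt_lem; last exact: ltn_ord.
  have [_ T1] := Hends i (ltnW Hi); have [_ T2] := Hends i.+1 Hi.
  rewrite T1 T2; have := (sortedP 0%N Hso) i; rewrite Hs => /(_ Hi).
  rewrite /t; lia.
Qed.

Lemma edge_alt (V : finType) (E : {set {set V}}) (lam : {set V} -> {fset nat})
  (x y : (V + Gt E lam)%type) : [set x; y] \in Fs E lam ->
  exists g w, (x = inl w /\ y = inr g) \/ (x = inr g /\ y = inl w).
Proof.
case/imsetP => [[g w]] _ HS; exists g, w.
have Hx : x \in edg (g, w) by rewrite -HS set21.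
have Hy : y \in edg (g, w) by rewrite -HS set22.
move: Hx Hy; rewrite !inE => /orP [] /eqP Ex /orP [] /eqP Ey; subst x y; auto.
- have : inr g \in edg (g, w) by rewrite !inE eqxx orbT.
  by rewrite -HS !inE orbb.
- have : inl w \in edg (g, w) by rewrite !inE eqxx.
  by rewrite -HS !inE orbb.
Qed.

Lemma stepL (V : finType) (E : {set {set V}}) (lam : {set V} -> {fset nat})
  (a : V) (g : Gt E lam) t : [set inl a; inr g] \in Fs E lam ->
  t \in mu [set inl a; inr g] -> a \in ends g /\ t = lab a g.
Proof.
case/imsetP => q; rewrite inE => Hq HS.
have Eq := edg_inj (HS : edg (g, a) = edg q); subst q.
rewrite -[[set _; _]]/(edg (g, a)) muE in_fset1 => /eqP ->; by [].
Qed.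

Lemma stepR (V : finType) (E : {set {set V}}) (lam : {set V} -> {fset nat})
  (b : V) (g : Gt E lam) t : [set inr g; inl b] \in Fs E lam ->
  t \in mu [set inr g; inl b] -> b \in ends g /\ t = lab b g.
Proof. by rewrite setUC; apply: stepL. Qed.

Definition isL (V T : Type) (x : V + T) := if x is inl _ then true else false.
Definition getl (V T : Type) (d : V) (x : V + T) := if x is inl a then a else d.
Definition getr (V T : Type) (d : T) (x : V + T) := if x is inr a then a else d.

Lemma bwd (V : finType) (E : {set {set V}}) (lam : {set V} -> {fset nat}) u v :
  is_tgraph E lam -> strict_journey (Fs E lam) (@mu V E lam) (inl u) (inl v) ->
  strict_journey E lam u v.
Proof.
move=> HG [P [TS [Hs [Hp [Hu [Hl [Hst Hso]]]]]]].
set n := size P in Hs Hp Hst.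
pose f j := nth (inl u) (inl u :: P) j.
have Hst' : forall j, (j < n)%N -> [set f j; f j.+1] \in Fs E lam /\
    nth 0%N TS j \in mu [set f j; f j.+1] := Hst.
have Alt : forall j, (j <= n)%N -> isL (f j) = ~~ odd j.
  elim=> [//|j IH] Hj.
  have [g [w [[E1 E2] | [E1 E2]]]] := edge_alt (Hst' j Hj).1;
    move: (IH (ltnW Hj)); rewrite /= -/(f j) -/(f j.+1) E1 E2 /= => <- //.
have Hfn : f n = inl v by rewrite /f -Hl (last_nth (inl u)).
have Hev : odd n = false by have := Alt n (leqnn n); rewrite Hfn; case: (odd n).
set k := n./2.
have Hnk : n = k.*2 by rewrite -[in LHS](odd_double_half n) Hev.
have HsP : size P = k.*2 by rewrite -Hnk.
have Hk : (0 < k)%N by move: Hp; rewrite Hnk double_gt0.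
have g0 : Gt E lam.
  have := Alt 1%N; rewrite Hnk; case: (f 1) => [x|g0 _]; last exact: g0.
  by move=> H; exfalso; have := H ltac:(rewrite -Hnk; lia).
pose A i := getl u (f i.*2). pose G i := getr g0 (f (i.*2).+1).
have HA : forall i, (i <= k)%N -> f i.*2 = inl (A i).
  move=> i Hi; have := Alt i.*2; rewrite odd_double /A; case: (f i.*2) => [x _ //| y H].
  by have := H ltac:(rewrite Hnk leq_double //).
have HG' : forall i, (i < k)%N -> f (i.*2).+1 = inr (G i).
  move=> i Hi; have := Alt (i.*2).+1; rewrite /= odd_double /G; case: (f _) => [x H| y _ //].
  by have := H ltac:(rewrite Hnk ltn_double //).
have Hfact : forall i, (i < k)%N ->
  [/\ A i \in ends (G i), A i.+1 \in ends (G i), A i != A i.+1,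
      nth 0%N TS i.*2 = lab (A i) (G i) & nth 0%N TS (i.*2).+1 = lab (A i.+1) (G i)].
  move=> i Hi.
  have [H1 H2] := Hst' i.*2 ltac:(lia).
  rewrite HA ?HG' // in H1 H2; try lia.
  have [Ha Ta] := stepL H1 H2.
  have [H3 H4] := Hst' (i.*2).+1 ltac:(lia).
  rewrite -doubleS HA ?HG' // in H3 H4; try lia.
  have [Hb Tb] := stepR H3 H4.
  split=> //.
  apply/eqP => Heq.
  have : f i.*2 = f (i.+1).*2.
    rewrite HA; last lia. rewrite HA; last lia. by rewrite Heq.
  move/eqP; rewrite /f nth_uniq //=; rewrite ?HsP; lia.
have Hph : forall i, (i < k)%N -> ph (A i) (G i) = 0%N /\ ph (A i.+1) (G i) = 1%N.
  move=> i Hi; have [Ha Hb Hab T1 T2] := Hfact i Hi.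
  have Hs1 := ph_sum HG Ha Hb Hab.
  have : (nth 0%N TS i.*2 < nth 0%N TS (i.*2).+1)%N.
    by apply: (sortedP 0%N Hso); rewrite Hs; lia.
  rewrite T1 T2 /lab => Hlt; have := mono_lem (ltn_ord _) Hlt; lia.
pose p := mkseq (fun i => A i.+1) k.
pose ts := mkseq (fun i => tim (G i)) k.
have Hpn : forall i, (i <= k)%N -> nth u (u :: p) i = A i.
  case=> [|i] Hi; first by rewrite /A /= /f.
  by rewrite /= /p nth_mkseq.
have Htn : forall i, (i < k)%N -> nth 0%N ts i = tim (G i).
  by move=> i Hi; rewrite /ts nth_mkseq.
exists p, ts.
split; first by rewrite !size_mkseq.
split; first by rewrite size_mkseq.
split.
  apply/(uniqP u) => i j; rewrite !inE /= size_mkseq => Hi Hj.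
  rewrite !Hpn; try lia.
  move=> Heq; have : f i.*2 = f j.*2 by rewrite !HA ?Heq //; lia.
  move/eqP; rewrite /f nth_uniq //=; rewrite ?HsP; lia.
split.
  rewrite (last_nth u) size_mkseq Hpn //.
  by have := HA k (leqnn k); rewrite -Hnk Hfn => -[].
split.
  move=> i; rewrite size_mkseq => Hi.
  have [Ha Hb Hab T1 T2] := Hfact i Hi.
  have -> : [set nth u (u :: p) i; nth u p i] = ends (G i).
    rewrite -[nth u p i]/(nth u (u :: p) i.+1) !Hpn //; try lia.
    by rewrite (card2_eq (ends2 (G i) HG) Ha Hb Hab).
  by rewrite Htn //; apply: ends_E.
apply/(sortedP 0%N) => i; rewrite size_mkseq => Hi.
rewrite !Htn; try lia.
have [_ Hb _ _ T2] := Hfact i ltac:(lia).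
have [Ha' _ _ T1' _] := Hfact i.+1 Hi.
have [_ P2] := Hph i ltac:(lia).
have [P1 _] := Hph i.+1 Hi.
have : (nth 0%N TS (i.*2).+1 < nth 0%N TS (i.+1).*2)%N.
  by rewrite doubleS; apply: (sortedP 0%N Hso); rewrite Hs; lia.
rewrite T2 T1' /lab P1 P2 => Hlt; have := mono_lem (ltn_ord _) Hlt; lia.
Qed.

Unset Implicit Arguments.

Theorem mainTheorem11 (V : finType) (E : {set {set V}})
  (lam : {set V} -> {fset nat}) :
  is_tgraph E lam ->
  exists (W : finType) (F : {set {set W}}) (mu : {set W} -> {fset nat})
         (sigma : V -> W),
    is_tgraph F mu /\ is_happy F mu /\
        #|W| = (#|V| + 2 * ncontacts E lam)%N /\
        #|F| = (4 * ncontacts E lam)%N /\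
        injective sigma /\ forall u v : V,
          reach_arc E lam u v <-> reach_arc F mu (sigma u) (sigma v).
Proof.
move=> HG.
exists (V + Gt E lam)%type, (Fs E lam), (@mu V E lam), inl.
split.
  split=> e /imsetP [q _ ->].
    by rewrite /edg cards2.
  rewrite muE; apply/eqP => /fsetP /(_ (lab q.2 q.1)).
  by rewrite in_fset1 eqxx in_fset0.
split.
  split.
    move=> e e' /imsetP [q Hq ->] /imsetP [q' Hq' ->] Hne _.
    apply/fsetP => x; rewrite in_fsetI !muE !in_fset1 in_fset0.
    apply/negP => /andP [/eqP Hx /eqP Hx'].
    rewrite !inE in Hq Hq'.
    have Eq := lab_inj HG Hq Hq' (etrans (esym Hx) Hx').
    by move: Hne; case: q Eq {Hq Hx} => [g w]; case: q' {Hq' Hx'} => [g' w'] /= [-> ->]; rewrite eqxx.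
  move=> e /imsetP [q _ ->]; by rewrite muE cardfs1.
split.
  by rewrite card_sum card_prod card_bool card_seq_sub ?cs_uniq // cs_size mulnC.
split; first exact: card_F.
split; first by move=> x y [].
move=> u v; split.
  by case=> Hne J; split; [by rewrite inj_eq // => x y [] | exact: fwd].
by case=> Hne J; split; [move: Hne; rewrite inj_eq // => x y [] | exact: bwd].
Qed.
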